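(* Let $N\geq 1$, $h=1/N$, and fix a simplicial complex (graph) $K$. Consider the discrete $N$-layer TOGL network with node updates $x_v^{\ell}=x_v^{\ell-1}+\frac1N\big(\psi(\mathrm{PD}(\sigma;f_\theta,x^{\ell-1},K))+m_v^{\ell-1}\big)$, and its continuous counterpart $\dot x_v^{t}=\psi(\mathrm{PD}(\sigma;f_\theta,x^{t},K))+m_v^{t}$, both started from the same initial features. Suppose the message map $m$ is $L_m$-Lipschitz and the map $x\mapsto\psi(\mathrm{PD}(\sigma;f_\theta,x,K))$ is $L_\beta$-Lipschitz. Then the discretization error $e_v(\ell)=x_v^{\ell/N}-x_v^{\ell}$ for node $v$ at layer $\ell$ satisfies $$\|e_v(\ell)\|_1\leq R_1(h)\,\frac{N\big(\exp(L_m+L_\beta)-1\big)}{L_m+L_\beta},$$ where $R_1(h)$ is the (bound on the) remainder term of the first-order Taylor expansion $x_v^{s+h}=x_v^{s}+h\dot x_v^{s}+R_1(h)$ of the continuous TOGL trajectory.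
   Context: Here $x^t=\{x_u^t\}_u$ denotes all node embeddings; $m_v$ is the aggregated message to node $v$ computed by a message-passing layer (same parametrization in the discrete and continuous models, differing only in inputs); $\mathrm{PD}(\sigma;f_\theta,x,K)$ denotes the persistence diagram (with entries associated to node $v$) computed from the vertex-color filtration of $K$ induced by the filtering function $f_\theta$ applied to the node features $x$ (each simplex entering at the maximum of $f_\theta$ over its vertices), and $\psi$ is a vectorization map (e.g. an MLP/DeepSet) sending the diagram to a vector attached to node $v$; $L_\beta=L_\psi L_\theta$. The continuous trajectory at time $\ell/N$ is compared with the output of discrete layer $\ell$. *)

(* Defs.v *)
From HB Require Import structures.
From mathcomp Require Import all_boot all_order all_algebra.
From mathcomp Require Import all_classical all_reals all_analysis.
Set Implicit Arguments. Unset Strict Implicit. Unset Printing Implicit Defensive.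
Import Order.TTheory GRing.Theory Num.Theory.
Import numFieldNormedType.Exports.
Local Open Scope ring_scope.

(* Node embeddings of a graph with n nodes and feature dimension d:
   row v of X : 'M[R]_(n, d) is the embedding x_v of node v. *)

Definition node_l1 (R : realType) (n d : nat) (X : 'M[R]_(n, d)) (v : 'I_n) : R :=
  \sum_(i < d) `|X v i|.

Definition emb_norm (R : realType) (n d : nat) (X : 'M[R]_(n, d)) : R :=
  \big[Num.max/0]_(v < n) node_l1 X v.

Definition lipschitz_emb (R : realType) (n d : nat)
    (f : 'M[R]_(n, d) -> 'M[R]_(n, d)) (L : R) : Prop :=
  forall (X Y : 'M[R]_(n, d)) (v : 'I_n),
    node_l1 (f X - f Y) v <= L * emb_norm (X - Y).

(* Discrete N-layer TOGL network:
   x^l = x^{l-1} + (1/N) (beta(x^{l-1}) + m(x^{l-1})),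
   where beta x = psi(PD(sigma; f_theta, x, K)) (row v = vector attached to v)
   and m x is the aggregated message (row v = m_v). *)
Fixpoint togl_discrete (R : realType) (n d : nat)
    (beta m : 'M[R]_(n, d) -> 'M[R]_(n, d)) (N : nat) (x0 : 'M[R]_(n, d))
    (l : nat) : 'M[R]_(n, d) :=
  match l with
  | 0 => x0
  | l'.+1 =>
      let x := togl_discrete beta m N x0 l' in
      x + (N%:R)^-1 *: (beta x + m x)
  end.

(* Main.v *)
Require Import Defs.
From HB Require Import structures.
From mathcomp Require Import all_boot all_order all_algebra.
From mathcomp Require Import all_classical all_reals all_analysis.
From mathcomp Require Import ring lra.
Import Order.TTheory GRing.Theory Num.Theory.
Import numFieldNormedType.Exports.
Local Open Scope ring_scope.
Local Open Scope classical_set_scope.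

Lemma node_l1_ge0 {R : realType} {n d : nat} (A : 'M[R]_(n, d)) v : 0 <= node_l1 A v.
Proof. by apply: sumr_ge0 => i _. Qed.

Lemma node_l1D {R : realType} {n d : nat} {A B : 'M[R]_(n, d)} {v : 'I_n} :
  node_l1 (A + B) v <= node_l1 A v + node_l1 B v.
Proof.
rewrite /node_l1 -big_split /=; apply: ler_sum => i _; rewrite mxE; exact: ler_normD.
Qed.

Lemma node_l1Z {R : realType} {n d : nat} (c : R) (A : 'M[R]_(n, d)) v :
  node_l1 (c *: A) v = `|c| * node_l1 A v.
Proof.
rewrite /node_l1 mulr_sumr; apply: eq_bigr => i _; by rewrite mxE normrM.
Qed.

Lemma emb_norm_le {R : realType} {n d : nat} {A : 'M[R]_(n, d)} {B : R} :
  0 <= B -> (forall v, node_l1 A v <= B) -> emb_norm A <= B.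
Proof.
move=> B0 H; rewrite /emb_norm; elim/big_ind: _ => //.
by move=> x y hx hy; rewrite ge_max hx hy.
Qed.

Theorem proposition3 (R : realType) (n d : nat) (N : nat) (hN : (1 <= N)%N)
    (beta m : 'M[R]_(n, d) -> 'M[R]_(n, d))
    (Lm Lb : R) (hLm : 0 <= Lm) (hLb : 0 <= Lb) (hL : 0 < Lm + Lb)
    (Hm : lipschitz_emb m Lm) (Hb : lipschitz_emb beta Lb)
    (x0 : 'M[R]_(n, d)) (xc : R -> 'M[R]_(n, d))
    (Hinit : xc 0 = x0)
    (Hode : forall t : R, 0 <= t <= 1 ->
       is_derive t (1 : R) xc (beta (xc t) + m (xc t)))
    (R1 : R)
    (Htaylor : forall s : R, 0 <= s -> s + (N%:R)^-1 <= 1 ->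
       forall v : 'I_n,
         node_l1 (xc (s + (N%:R)^-1) - xc s - (N%:R)^-1 *: 'D_1 xc s) v <= R1) :
  forall (l : nat), (l <= N)%N -> forall v : 'I_n,
    node_l1 (xc (l%:R / N%:R) - togl_discrete beta m N x0 l) v
      <= R1 * (N%:R * (expR (Lm + Lb) - 1) / (Lm + Lb)).
Proof.
move=> l0 hl0 v0.
have N0 : 0 < N%:R :> R by rewrite ltr0n.
pose h := (N%:R : R)^-1.
have h0 : 0 < h by rewrite invr_gt0.
have hle1 : h <= 1 by rewrite invf_le1 // ler1n.
have Nh : N%:R * h = 1 by rewrite mulfV // gt_eqF.
have R10 : 0 <= R1.
  apply: le_trans (Htaylor 0 (lexx _) _ v0); first exact: node_l1_ge0.
  by rewrite add0r.
set L := Lm + Lb.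
set q := 1 + h * L.
set B := fun l : nat => R1 * \sum_(k < l) q ^+ k.
have q1 : 1 <= q by rewrite lerDl mulr_ge0 //; exact: ltW.
have B0 : forall l, 0 <= B l.
  by move=> l; apply: mulr_ge0 => //; apply: sumr_ge0 => k _; apply: exprn_ge0; apply: le_trans q1.
have sdiv : forall l : nat, (l <= N)%N -> (0 <= (l%:R / N%:R : R)) && ((l%:R / N%:R : R) <= 1).
  move=> l hl; apply/andP; split; first by rewrite divr_ge0 ?ler0n // ltW.
  by rewrite ler_pdivrMr // mul1r ler_nat.
have main : forall l, (l <= N)%N -> forall v,
    node_l1 (xc (l%:R / N%:R) - togl_discrete beta m N x0 l) v <= B l.
  elim=> [|l IH] hl v.
    rewrite mul0r Hinit subrr /B big_ord0 mulr0 /node_l1.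
    by rewrite big1 // => i _; rewrite mxE normr0.
  have hl' : (l <= N)%N by apply: ltnW.
  set s := (l%:R / N%:R : R).
  have hs : l.+1%:R / N%:R = s + h by rewrite -addn1 natrD mulrDl mul1r.
  have [s0 s1] : 0 <= s /\ s <= 1 by move/andP: (sdiv l hl') => [].
  have hsh : s + h <= 1 by rewrite -hs; case/andP: (sdiv _ hl).
  have Dv := @derive_val _ _ _ _ _ _ _ (Hode s (sdiv l hl')).
  set x := togl_discrete beta m N x0 l.
  have -> : xc (l.+1%:R / N%:R) - togl_discrete beta m N x0 l.+1 =
     (xc (s + h) - xc s - h *: 'D_1 xc s) + (xc s - x)
       + h *: ((beta (xc s) - beta x) + (m (xc s) - m x)).
    rewrite hs /= -/x Dv; apply/matrixP => i j; rewrite !mxE /h; ring.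
  set E := emb_norm (xc s - x).
  have EB : E <= B l by rewrite /E; apply: (emb_norm_le (B0 l)) => w; exact: IH hl' w.
  have E0 : 0 <= E.
    rewrite /E /emb_norm; elim/big_ind: _ => // [a b ha hb|i _]; [by rewrite le_max ha | exact: node_l1_ge0].
  apply: le_trans (node_l1D) _.
  apply: le_trans (lerD (node_l1D) (lexx _)) _.
  rewrite node_l1Z ger0_norm; last exact: ltW.
  have T1 := Htaylor s s0 hsh v; rewrite -/h in T1.
  have T2 := IH hl' v; rewrite -/s -/x in T2.
  have T3 : node_l1 ((beta (xc s) - beta x) + (m (xc s) - m x)) v <= L * B l.
    apply: le_trans (node_l1D) _.
    have := Hb (xc s) x v; have := Hm (xc s) x v; rewrite -/E => h1 h2.
    have h3 : Lb * E <= Lb * B l by apply: ler_wpM2l.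
    have h4 : Lm * E <= Lm * B l by apply: ler_wpM2l.
    rewrite /L mulrDl addrC; apply: lerD; [exact: le_trans h1 h4 | exact: le_trans h2 h3].
  have T4 : h * node_l1 ((beta (xc s) - beta x) + (m (xc s) - m x)) v <= h * (L * B l).
    by apply: ler_wpM2l => //; exact: ltW.
  have -> : B l.+1 = R1 + B l + h * (L * B l).
    rewrite /B big_ord_recl expr0 /=.
    under eq_bigr do rewrite /bump /= exprS.
    rewrite -mulr_sumr; set S := (\sum_(k < l) _); rewrite /q /h /L; ring.
  lra.
apply: le_trans (main _ hl0 v0) _.
rewrite /B; apply: ler_wpM2l => //.
have sumq : (\sum_(k < l0) q ^+ k) * (h * L) = q ^+ l0 - 1.
  by rewrite subrX1 mulrC /q addrAC subrr add0r.
have qN : q ^+ l0 <= expR L.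
  apply: le_trans (ler_weXn2l q1 hl0) _.
  rewrite -[L in expR L]mul1r -Nh -mulrA expRM_natl.
  apply: lerXn2r; rewrite ?nnegrE ?expR_ge0 //; first exact: le_trans q1.
  exact: expR_ge1Dx.
rewrite ler_pdivlMr //.
have -> : (\sum_(k < l0) q ^+ k) * L = N%:R * (q ^+ l0 - 1).
  by rewrite -sumq mulrCA [N%:R * (h * L)]mulrA Nh mul1r.
apply: ler_wpM2l; first exact: ler0n.
exact: lerB qN (lexx _).
Qed.
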